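(* Fix integers $d\ge 2$, $k\ge 1$, a configuration $\omega\in\{0,1\}^{\mathbb{E}_{d,k}}$ and a set $A\subset[d]_\star$. Then the sets $\mathrm{prog}(e)$, $e\in\sigma(A)$, are pairwise disjoint. If moreover there exists $w\in[d]_\star$ such that $A\subset\{w\cdot v: v\in\bigcup_{n=0}^{k}[d]^n\}$, then: (i) for every long edge $e=\langle u,u\cdot r\rangle$ (with $r\in[d]^k$) such that $u\in\pi(A)$ and $u\cdot r\notin\pi(A)$, there exists a unique $e'\in\mathrm{trace}(e)\cap\sigma(A)$; (ii) $\Pi(A)$ is the disjoint union of $\pi(A)$ and the sets $\Pi(A)\cap\mathrm{prog}(e)$ for $e\in\sigma(A)$.
   Context: $[d]=\{1,\dots,d\}$, $[d]_\star=\bigcup_{n\ge0}[d]^n$ (finite sequences, $[d]^0=\{o\}$), with concatenation $u\cdot v$. The oriented graph $\mathbb{T}_{d,k}$ has vertex set $[d]_\star$ and edge set $\mathbb{E}_{d,k}=\mathbb{E}^{s}_{d,k}\cup\mathbb{E}^{\ell}_{d,k}$, where short edges are $\mathbb{E}^s_{d,k}=\{\langle u,u\cdot a\rangle:u\in[d]_\star,a\in[d]\}$ and long edges are $\mathbb{E}^\ell_{d,k}=\{\langle u,u\cdot r\rangle:u\in[d]_\star,r\in[d]^k\}$. An edge is open if $\omega$ equals 1 on it. The progeny of a vertex $u$ is $\mathrm{prog}(u)=\{u\cdot v:v\in[d]_\star\}$; for an edge $e=\langle u,v\rangle$, $\mathrm{prog}(e)=\mathrm{prog}(v)$. For a long edge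 $e=\langle u,u\cdot r\rangle$ with $r=(r_1,\dots,r_k)$, $\mathrm{trace}(e)$ is the set of $k$ short edges $\langle u,u\cdot r_1\rangle,\langle u\cdot r_1,u\cdot(r_1,r_2)\rangle,\dots,\langle u\cdot(r_1,\dots,r_{k-1}),u\cdot r\rangle$. $\Pi(A)$ is the set of vertices reachable from some vertex of $A$ by an oriented path of open edges (short or long; the empty path allowed, so $A\subseteq\Pi(A)$), and $\pi(A)$ is the set of vertices reachable from $A$ by an oriented path of open short edges only. A short edge $\langle u,v\rangle$ is a hub for $A$ if $\mathrm{prog}(v)\cap\pi(A)=\varnothing$ and $\mathrm{prog}(u)\cap\pi(A)\neq\varnothing$; $\sigma(A)$ denotes the set of hubs for $A$. *)

(* Defs.v *)
From mathcomp Require Import all_boot.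
Set Implicit Arguments. Unset Strict Implicit. Unset Printing Implicit Defensive.

(* Vertices of T_{d,k}: finite words over the alphabet 'I_d (labels 0..d-1,
   standing for [d] = {1..d}); concatenation is ++, the root o is [::]. *)
Definition vertex (d : nat) := seq 'I_d.
Definition opair (d : nat) := (vertex d * vertex d)%type.

Definition short_edge d (e : opair d) : Prop :=
  exists a : 'I_d, e.2 = e.1 ++ [:: a].
Definition long_edge d (k : nat) (e : opair d) : Prop :=
  exists r : seq 'I_d, size r = k /\ e.2 = e.1 ++ r.
Definition is_edge d k (e : opair d) : Prop := short_edge e \/ long_edge k e.

(* A configuration omega : {0,1}^{E_{d,k}} is given as a boolean function on
   oriented pairs; only its values on edges matter. *)
Definition config d := opair d -> bool.

Inductive reach (T : Type) (R : T -> T -> Prop) : T -> T -> Prop :=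
| reach_refl x : reach R x x
| reach_step x y z : R x y -> reach R y z -> reach R x z.

Definition open_step d k (omega : config d) (x y : vertex d) : Prop :=
  is_edge k (x, y) /\ omega (x, y) = true.
Definition open_short_step d (omega : config d) (x y : vertex d) : Prop :=
  short_edge (x, y) /\ omega (x, y) = true.

Definition PiA d k (omega : config d) (A : vertex d -> Prop) (v : vertex d) : Prop :=
  exists2 a, A a & reach (open_step k omega) a v.
Definition piA d (omega : config d) (A : vertex d -> Prop) (v : vertex d) : Prop :=
  exists2 a, A a & reach (open_short_step omega) a v.

Definition prog d (u : vertex d) (x : vertex d) : Prop := exists v, x = u ++ v.
Definition prog_edge d (e : opair d) := prog e.2.

(* hubs: sigma(A) *)
Definition hub d (omega : config d) (A : vertex d -> Prop) (e : opair d) : Prop :=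
  short_edge e /\
  (forall x, prog e.2 x -> ~ piA omega A x) /\
  (exists x, prog e.1 x /\ piA omega A x).

Definition trace d (u r : vertex d) (e : opair d) : Prop :=
  exists i, i < size r /\ e = (u ++ take i r, u ++ take i.+1 r).

(* Main.v *)
Require Import Defs.
From mathcomp Require Import all_boot.
From Stdlib Require Import Classical.
From mathcomp Require Import zify.

Section Aux.
Variable d : nat.
Implicit Types (u v a x y z p q r s t : vertex d).

Lemma catL (a v w : vertex d) : a ++ v = a ++ w -> v = w.
Proof. by elim: a => //= c a IH [] /IH. Qed.

Lemma prog_refl u : prog u u.
Proof. by exists [::]; rewrite cats0. Qed.

Lemma prog_trans p q z : prog p q -> prog q z -> prog p z.
Proof. by move=> [s ->] [t ->]; exists (s ++ t); rewrite catA. Qed.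

Lemma prefix_cmp p s q s' : p ++ s = q ++ s' -> size p <= size q -> prog p q.
Proof.
move=> E le; exists (take (size q - size p) s).
have := f_equal (take (size q)) E.
rewrite [in X in _ = X]take_size_cat // take_cat.
case: ltnP => h; first by move: (leq_trans h le); rewrite ltnn.
by move=> H; rewrite H.
Qed.

Lemma prog_take u r i j : i <= j -> prog (u ++ take i r) (u ++ take j r).
Proof.
move=> le; exists (drop i (take j r)).
by rewrite -catA -{1}(cat_take_drop i (take j r)) take_takel.
Qed.

Lemma take_short u r i : i < size r -> short_edge (u ++ take i r, u ++ take i.+1 r).
Proof.
case: r => [//|c r'] lt; exists (nth c (c :: r') i).
change (u ++ take i.+1 (c :: r') = (u ++ take i (c :: r')) ++ [:: nth c (c :: r') i]).
by rewrite (take_nth c lt) -cats1 catA.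
Qed.

Lemma search (P : nat -> Prop) n : P 0 -> ~ P n -> exists i, i < n /\ P i /\ ~ P i.+1.
Proof.
elim: n => [|n IH] H0 Hn; first by [].
case: (classic (P n)) => Pn; first by exists n.
have [i [lt [Pi nPi]]] := IH H0 Pn.
by exists i; rewrite ltnS ltnW.
Qed.

Variable omega : config d.
Variable A : vertex d -> Prop.
Variable k : nat.

Lemma reach_short_ext a x : reach (open_short_step omega) a x ->
  exists v, x = a ++ v /\ forall i, reach (open_short_step omega) a (a ++ take i v).
Proof.
elim => [y|y y' z [[c /= ->] hom] _ [v [-> IH]]].
  by exists [::]; rewrite cats0; split => // i; constructor.
exists (c :: v); split; first by rewrite -catA.
case => [|i]; first by rewrite take0 cats0; constructor.
rewrite /= -cat1s catA; apply: reach_step (IH i).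
by split => //; exists c.
Qed.

Lemma mid a z y : reach (open_short_step omega) a z -> prog y z -> prog a y ->
  reach (open_short_step omega) a y.
Proof.
move=> /reach_short_ext [v [-> H]] [t Et] [s Es].
rewrite Es -catA in Et; move/catL: Et => Ev.
by rewrite Es -(take_size_cat t (erefl (size s))) -Ev.
Qed.

Lemma reach_open_ext a x : reach (open_step k omega) a x ->
  exists t, x = a ++ t /\ (reach (open_short_step omega) a x \/ size a + k <= size x).
Proof.
elim => [y|y y' z [[[c /= ->]|[r /= [sr ->]]] hom] _ [t [-> IH]]].
- by exists [::]; rewrite cats0; split => //; left; constructor.
- exists (c :: t); split; first by rewrite -catA.
  case: IH => [h|h]; first by left; apply: reach_step h; split => //; exists c.
  by right; move: h; rewrite !size_cat /=; lia.
- exists (r ++ t); split; first by rewrite catA.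
  by right; rewrite !size_cat sr; lia.
Qed.

Definition Q p := exists z, prog p z /\ piA omega A z.

Lemma hub_on u r : Q u -> ~ Q (u ++ r) ->
  exists i, i < size r /\ hub omega A (u ++ take i r, u ++ take i.+1 r).
Proof.
move=> Qu nQ.
have [i [lt [Pi nPi]]] := @search (fun i => Q (u ++ take i r)) (size r)
   ltac:(by rewrite /= take0 cats0) ltac:(by rewrite /= take_size).
exists i; split => //; split; first exact: take_short.
split => //= x px pix; apply: nPi; by exists x.
Qed.

End Aux.

Arguments Q {d}. Arguments hub_on {d omega A u r}.
Arguments reach_short_ext {d omega a x}. Arguments reach_open_ext {d omega k a x}.
Arguments mid {d omega a z y}. Arguments prog_refl {d}. Arguments prog_trans {d p q z}.
Arguments prefix_cmp {d p s q s'}. Arguments prog_take {d}.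
Theorem lemma5 (d k : nat) (hd : 2 <= d) (hk : 1 <= k)
  (omega : config d) (A : vertex d -> Prop) :
  (forall e1 e2, hub omega A e1 -> hub omega A e2 -> e1 <> e2 ->
     forall x, prog_edge e1 x -> prog_edge e2 x -> False) /\
  ((exists w : vertex d, forall a, A a -> exists v, size v <= k /\ a = w ++ v) ->
     (forall u r : vertex d, size r = k ->
        piA omega A u -> ~ piA omega A (u ++ r) ->
        exists! e', trace u r e' /\ hub omega A e') /\
     (forall x, PiA k omega A x <->
        (piA omega A x \/ exists e, hub omega A e /\ PiA k omega A x /\ prog_edge e x)) /\
     (forall e, hub omega A e -> forall x, prog_edge e x -> ~ piA omega A x)).
Proof.
have P1 : forall e1 e2, hub omega A e1 -> hub omega A e2 ->
    (exists t, e2.2 = e1.2 ++ t) -> e1 = e2.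
  move=> [u1 q1] [u2 q2] [[a1 /= E1] [H1 _]] [[a2 /= E2] [_ [x [px pix]]]] [t /= Et].
  subst q1 q2; case/lastP: t Et => [|t c] Et.
    rewrite cats0 !cats1 in Et; by case: (rcons_inj Et) => -> ->.
  rewrite -rcons_cat cats1 in Et; case: (rcons_inj Et) => Eu _.
  exfalso; apply: (H1 x) => //; apply: prog_trans px; by exists t.
split.
  move=> e1 e2 h1 h2 ne x [s1 Ex1] [s2 Ex2]; rewrite Ex1 in Ex2.
  case: (leqP (size e1.2) (size e2.2)) => le.
    by apply: ne; apply: P1 => //; exact: prefix_cmp Ex2 le.
  by apply: ne; symmetry; apply: P1 => //; exact: prefix_cmp (esym Ex2) (ltnW le).
move=> [w Hw].
have K : forall u r, size r = k -> piA omega A u -> ~ piA omega A (u ++ r) ->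
    ~ Q omega A (u ++ r).
  move=> u r sr [a' Aa' ra'] nur [z [[s Ezs] [a Aa ra]]].
  have [v [Ez _]] := reach_short_ext ra.
  have [t' [Eu _]] := reach_short_ext ra'.
  case: (leqP (size a) (size (u ++ r))) => le.
    apply: nur; exists a => //; apply: (mid ra); first by exists s.
    exact: prefix_cmp (etrans (esym Ez) Ezs) le.
  have [v1 [sv1 Ea]] := Hw a Aa; have [v2 [sv2 Ea']] := Hw a' Aa'.
  move: le; rewrite Eu Ea' Ea !size_cat sr; lia.
split.
  move=> u r sr pu npur.
  have Qu : Q omega A u by exists u; split => //; exact: prog_refl.
  have [i [lt h]] := hub_on Qu (K u r sr pu npur).
  exists (u ++ take i r, u ++ take i.+1 r); split; first by split => //; exists i.
  move=> e' [[j [ltj ->]] [_ [hj [y [py piy]]]]].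
  case: h => _ [hi [y' [py' piy']]].
  move: hi hj py py' => /= hi hj py py'.
  case: (ltngtP i j) => c.
  - exfalso; exact: hi y (prog_trans (prog_take u r _ _ c) py) piy.
  - by exfalso; exact: hj y' (prog_trans (prog_take u r _ _ c) py') piy'.
  - by rewrite c.
split; last by move=> e [_ [h _]] x px; exact: h x px.
move=> x; split.
  move=> Px; case: (classic (piA omega A x)) => pix; [by left|right].
  case: (Px) => a Aa ra.
  have [t [Ex alt]] := reach_open_ext ra.
  have nQ : ~ Q omega A (a ++ t).
    rewrite -Ex => [[z [[s Ez] [a' Aa' ra']]]].
    have [v [Ez' _]] := reach_short_ext ra'.
    case: (leqP (size a') (size x)) => le.
      apply: pix; exists a' => //; apply: (mid ra'); first by exists s.
      exact: prefix_cmp (etrans (esym Ez') Ez) le.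
    case: alt => [rs|sz]; first by apply: pix; exists a.
    have [v1 [sv1 Ea]] := Hw a Aa; have [v2 [sv2 Ea']] := Hw a' Aa'.
    move: le sz; rewrite Ea' Ea !size_cat; lia.
  have Qa : Q omega A a.
    by exists a; split; [exact: prog_refl | exists a => //; constructor].
  have [i [lt h]] := hub_on Qa nQ.
  exists (a ++ take i t, a ++ take i.+1 t); split => //; split => //.
  by exists (drop i.+1 t); rewrite Ex /= -catA cat_take_drop.
case => [[a Aa ra]| [e [_ [h _]]]]; last exact: h.
exists a => //; elim: ra => [y|y y' z [se om] _ IH]; first by constructor.
by apply: reach_step IH; split => //; left.
Qed.
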